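(* Let $p$ be a prime and let $A$ be a nontrivial finite $p$-group. Then for every integer $k$, $$r_{A\wr \mathbb{Z}/p\mathbb{Z},\,k}=(1-p^{-1})\,r_{A,k}+\frac{r_{A,k-1}^{\,p}}{p}.$$
   Context: For a finite $p$-group $G$ with $|G|=p^g$ and maximum element order $p^{f}$, and for $k\in\mathbb{Z}$, define $r_{G,k}=\frac{1}{p^g}\cdot\#\{x\in G:\ \mathrm{order}(x)\le p^{f-k}\}$. For groups $A,B$, let $K=\prod_{b\in B}A$, on which $B$ acts by $x\cdot(\alpha_b)_b=(\alpha_{x^{-1}b})_b$ for $x\in B$; the wreath product $A\wr B$ is the semidirect product $K\rtimes B$ for this action. *)

(* Defs.v *)
From HB Require Import structures.
From mathcomp Require Import all_boot all_order all_algebra all_fingroup all_solvable.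
Set Implicit Arguments. Unset Strict Implicit. Unset Printing Implicit Defensive.
Import GRing.Theory Num.Theory.

(* Wreath product A \wr B = K \rtimes B, K = prod_{b in B} A,             *)
Section Wreath.
Variables aT bT : finGroupType.
Local Open Scope group_scope.

Notation K := {dffun forall _ : bT, aT}.

Definition wr_act (x : bT) (al : K) : K := [ffun b => al (x^-1 * b)].

Definition wreath : predArgType := (K * bT)%type.
HB.instance Definition _ := Finite.on wreath.

Definition wr_mul (u v : wreath) : wreath := (u.1 * wr_act u.2 v.1, u.2 * v.2).
Definition wr_one : wreath := (1, 1).
Definition wr_inv (u : wreath) : wreath := (wr_act u.2^-1 u.1^-1, u.2^-1).

Lemma wr_act1 al : wr_act 1 al = al.
Proof. by apply/ffunP => b; rewrite ffunE invg1 mul1g. Qed.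

Lemma wr_actM x y al : wr_act x (wr_act y al) = wr_act (x * y) al.
Proof. by apply/ffunP => b; rewrite !ffunE invMg mulgA. Qed.

Lemma wr_act_mul x al be : wr_act x (al * be) = wr_act x al * wr_act x be.
Proof. by apply/ffunP => b; rewrite !ffunE. Qed.

Lemma wr_act_one x : wr_act x 1 = 1.
Proof. by apply/ffunP => b; rewrite !ffunE. Qed.

Lemma wr_act_inv x al : wr_act x al^-1 = (wr_act x al)^-1.
Proof. by apply/ffunP => b; rewrite !ffunE. Qed.

Lemma wr_mul1g : left_id wr_one wr_mul.
Proof. by case=> al x; rewrite /wr_mul /= wr_act1 !mul1g. Qed.

Lemma wr_mulVg : left_inverse wr_one wr_inv wr_mul.
Proof.
case=> al x; rewrite /wr_mul /wr_inv /wr_one /=.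
by rewrite -wr_act_mul !mulVg wr_act_one.
Qed.

Lemma wr_mulgA : associative wr_mul.
Proof.
case=> a x [b y] [c z]; rewrite /wr_mul /=.
by rewrite wr_act_mul wr_actM !mulgA.
Qed.

HB.instance Definition _ := Finite_isGroup.Build wreath wr_mulgA wr_mul1g wr_mulVg.

End Wreath.

Local Open Scope ring_scope.

Definition max_elt_order (gT : finGroupType) : nat := (\max_(x : gT) #[x]%g)%N.

Definition r_ratio (p : nat) (gT : finGroupType) (k : int) : rat :=
  let g := logn p #|gT| in
  let f := logn p (max_elt_order gT) in
  (#|[set x : gT | (#[x]%g)%:R <= (p%:R : rat) ^ (f%:Z - k)]|)%:R / (p ^ g)%:R.

(* Main.v *)
Require Import Defs.
From HB Require Import structures.
From mathcomp Require Import all_boot all_order all_algebra all_fingroup all_solvable.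
Import Order.TTheory GRing.Theory Num.Theory.

Definition cnt (G : finGroupType) (p t : nat) := #|[set x : G | (x ^+ (p ^ t) == 1)%g]|.

Section PGroup.
Variables (G : finGroupType) (p : nat).
Hypotheses (pr : prime p) (pG : (p.-group [set: G])%g).

Lemma pelt (x : G) : exists a, #[x]%g = p ^ a.
Proof.
have := mem_p_elt pG (in_setT x) => /p_natP [a ->]; by exists a.
Qed.

Lemma pow1_le (x : G) t : ((x ^+ (p ^ t))%g == 1%g) = (#[x]%g <= p ^ t).
Proof.
have p1 := prime_gt1 pr.
have [a Ha] := pelt x.
by rewrite -order_dvdn Ha dvdn_Pexp2l // leq_exp2l.
Qed.

Lemma Ncount (e : int) :
  #|[set x : G | ((#[x]%g)%:R : rat) <= (p%:R : rat) ^ e]|%R =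
  match e with Posz t => cnt G p t | Negz _ => 0%N end.
Proof.
have p1 := prime_gt1 pr.
case: e => [t|n].
  rewrite /cnt; apply: eq_card => x; rewrite !inE pow1_le -exprnP -natrX ler_nat //.
apply/eqP; rewrite cards_eq0; apply/eqP/setP => x; rewrite !inE.
apply/negbTE; rewrite -ltNge.
have h : ((p%:R : rat) ^ (Negz n) = ((p%:R : rat) ^+ n.+1)^-1)%R by [].
rewrite h; apply: (lt_le_trans (y := 1%R)).
  rewrite invf_lt1; last by rewrite exprn_gt0 // ltr0n ltnW.
  by rewrite exprn_egt1 // ?ltr1n.
by rewrite ler1n order_gt0.
Qed.

Lemma maxord t : (cnt G p t == #|G|) = (logn p (max_elt_order G) <= t).
Proof.
have p1 := prime_gt1 pr.
have [a Ha] : exists a, max_elt_order G = p ^ a.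
  by rewrite /max_elt_order (bigop.bigmax_eq_arg 1%g) //; apply: pelt.
rewrite Ha pfactorK // -(leq_exp2l _ _ p1) -Ha.
apply/idP/idP.
  move=> /eqP hc; apply/bigop.bigmax_leqP => x _.
  have hS : [set x : G | (x ^+ (p ^ t) == 1)%g] = setT.
    by apply/eqP; rewrite eqEcard subsetT cardsT -hc /cnt leqnn.
  have : x \in [set x : G | (x ^+ (p ^ t) == 1)%g] by rewrite hS inE.
  by rewrite inE pow1_le.
move/bigop.bigmax_leqP => h.
rewrite /cnt -cardsT; apply/eqP; apply: eq_card => x; rewrite !inE pow1_le h //.
Qed.

Lemma cnt0 : cnt G p 0 = 1%N.
Proof.
rewrite /cnt expn0 -[RHS](cards1 (1%g : G)); apply: eq_card => x.
by rewrite !inE expg1.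
Qed.

End PGroup.

Section Wr.
Variables (A : finGroupType) (p : nat).
Hypothesis pr : prime p.
Local Notation Z := 'Z_p.
Local Notation K := {dffun forall _ : Z, A}.
Local Notation W := (wreath A Z).
Local Open Scope group_scope.

Fixpoint Pn (al : K) (x : Z) (n : nat) : K :=
  if n is n'.+1 then al * wr_act x (Pn al x n') else 1.

Lemma wexp (u : W) n : u ^+ n = (Pn u.1 u.2 n, u.2 ^+ n).
Proof.
elim: n => [|n IH]; first by rewrite expg0.
by rewrite expgS IH [in RHS]expgS.
Qed.

Lemma ffexp (al : K) n b : (al ^+ n) b = (al b) ^+ n.
Proof. elim: n => [|n IH]; first by rewrite !expg0 ffunE. by rewrite !expgS ffunE IH. Qed.

Lemma Pn1 al n : Pn al 1 n = al ^+ n.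
Proof. elim: n => [|n IH] //=. by rewrite wr_act1 IH expgS. Qed.

Lemma PnS al x n b : Pn al x n.+1 b = al b * Pn al x n (x^-1 * b).
Proof. by rewrite /= !ffunE. Qed.

Lemma exp1_ffun (al : K) m : (al ^+ m == 1) = [forall b, (al b) ^+ m == 1].
Proof.
apply/eqP/forallP => [h b|h]; first by rewrite -ffexp h ffunE.
by apply/ffunP => b; rewrite ffexp ffunE; apply/eqP/h.
Qed.

Lemma wexp1 (al : K) x m : (((al, x) : W) ^+ m == 1) = (Pn al x m == 1) && (x ^+ m == 1).
Proof. by rewrite wexp. Qed.

Lemma cardZ : #|Z| = p.
Proof. by rewrite card_ord Zp_cast // prime_gt1. Qed.

Lemma xp (x : Z) : x ^+ p = 1.
Proof. by have := expg_cardG (in_setT x); rewrite cardsT cardZ. Qed.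

Lemma xord (x : Z) : x != 1 -> #[x] = p.
Proof.
move=> hx; have := order_dvdG (in_setT x); rewrite cardsT cardZ.
case/primeP: pr => _ hd /hd /orP [|/eqP //].
by rewrite order_eq1 (negbTE hx).
Qed.

Lemma conj_step al x b : Pn al x p (x^-1 * b) = (Pn al x p b) ^ (al b).
Proof.
have h := commuteX p (commute_refl ((al, x) : W)).
rewrite /commute wexp /= xp in h.
have := congr1 (fun u : W => u.1 b) h.
rewrite /= !ffunE invg1 mul1g => h2.
by rewrite /conjg -h2 mulKg.
Qed.

Lemma ord_const al x : x != 1 -> forall c, #[Pn al x p c] = #[Pn al x p 1].
Proof.
move=> hx c.
have hi : forall i, #[Pn al x p ((x^-1) ^+ i * 1)] = #[Pn al x p 1].
  elim=> [|i IH]; first by rewrite expg0 mulg1.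
  by rewrite expgS -mulgA conj_step orderJ.
have hc : c \in <[x^-1]>.
  have -> : <[x^-1]> = [set: Z] :> {set Z}.
    apply/eqP; rewrite eqEcard subsetT cardsT cardZ /=.
    have := orderE (x^-1); move=> <-; by rewrite orderV xord.
  by rewrite inE.
case/cycleP: hc => i ->; by rewrite -(hi i) mulg1.
Qed.

Lemma allcomp al x m : x != 1 ->
  (Pn al x p ^+ m == 1) = ((Pn al x p 1) ^+ m == 1).
Proof.
move=> hx; rewrite exp1_ffun; apply/forallP/idP => [h | h c]; first exact: h.
by rewrite -order_dvdn ord_const // order_dvdn.
Qed.

Lemma Qx al x s : x != 1 ->
  (((al, x) : W) ^+ (p ^ s.+1) == 1) = ((Pn al x p 1) ^+ (p ^ s) == 1).
Proof.
move=> hx; rewrite expnS expgM (wexp ((al, x) : W) p) /= xp.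
by rewrite wexp1 /= Pn1 expg1n andbT allcomp.
Qed.


Lemma Pn_local (al al' : K) x n c :
  (forall i, (i < n)%N -> al' ((x^-1) ^+ i * c) = al ((x^-1) ^+ i * c)) ->
  Pn al' x n c = Pn al x n c.
Proof.
elim: n c => [|n IH] c h; first by rewrite /= !ffunE.
rewrite !PnS; congr (_ * _).
  by have := h 0%N isT; rewrite expg0 mul1g.
apply: IH => i hi; rewrite mulgA -expgSr; exact: h.
Qed.

Definition tau (y : A) (al : K) : K := [ffun b => if b == 1 then y * al b else al b].

Definition Phi (al : K) (x : Z) := Pn al x p 1.

Lemma Phi_tau y al x : x != 1 -> Phi (tau y al) x = y * Phi al x.
Proof.
move=> hx; rewrite /Phi.
have e : forall al', Pn al' x p 1 = Pn al' x p.-1.+1 1 by move=> al'; rewrite prednK // prime_gt0.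
rewrite !e !PnS /tau ffunE eqxx -mulgA; congr (_ * _); congr (_ * _).
apply: Pn_local => i hi; rewrite ffunE.
have -> : (x^-1 ^+ i * (x^-1 * 1) == 1) = false.
  rewrite mulg1 -expgSr -order_dvdn orderV xord //.
  apply: gtnNdvd => //; rewrite -ltnS prednK // ?prime_gt0 // in hi.
by [].
Qed.

Definition fib x z := [set al : K | Phi al x == z].

Lemma tau_inj y : injective (tau y).
Proof.
apply: (can_inj (g := tau y^-1)) => al; apply/ffunP => b; rewrite !ffunE.
by case: eqP => // _; rewrite mulKg.
Qed.

Lemma fib_le x z w : x != 1 -> (#|fib x z| <= #|fib x w|)%N.
Proof.
move=> hx; rewrite -(card_imset _ (tau_inj (w * z^-1))).
apply: subset_leq_card; apply/subsetP => _ /imsetP [al hal ->].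
rewrite !inE Phi_tau // in hal *; by rewrite (eqP hal) -mulgA mulVg mulg1.
Qed.

Lemma fib_eq x z : x != 1 -> #|fib x z| = #|fib x 1|.
Proof. by move=> hx; apply/eqP; rewrite eqn_leq !fib_le. Qed.

Lemma card_pre x (S : {set A}) : x != 1 ->
  #|[set al : K | Phi al x \in S]| = (#|S| * #|fib x 1%g|)%N.
Proof.
move=> hx; rewrite -sum1_card (partition_big (fun al => Phi al x) (mem S)) /=; last first.
  by move=> al; rewrite inE.
rewrite -sum_nat_const; apply: eq_bigr => z hz.
rewrite -(@fib_eq x z hx) -sum1_card; apply: eq_bigl => al; rewrite !inE.
by case: eqP => [->|]; rewrite ?hz // andbF.
Qed.

Lemma fib1 x : x != 1 -> #|fib x 1| = (#|A| ^ p.-1)%N.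
Proof.
move=> hx; have h := @card_pre x [set: A] hx.
have e : #|[set al : K | Phi al x \in [set: A]]| = #|K|.
  by apply: eq_card => al; rewrite !inE.
rewrite e cardsT card_ffun cardZ in h.
move: h; rewrite (_ : (#|A| ^ p = #|A| * #|A| ^ p.-1)%N); last by rewrite -expnS prednK // prime_gt0.
move=> h.
have hA : (0 < #|A|)%N by apply/card_gt0P; exists 1.
by apply/eqP; rewrite -(eqn_pmul2l hA) h.
Qed.


Lemma card_split (Q : pred W) :
  #|[set u | Q u]| = (\sum_(x : Z) #|[set al : K | Q ((al, x) : W)]|)%N.
Proof.
rewrite -sum1_card (partition_big (fun u : W => u.2) xpredT) //.
apply: eq_bigr => x _; rewrite sum1_card.
have inj : injective (fun al : K => ((al, x) : W)) by move=> a b [].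
rewrite -(card_imset _ inj); apply: eq_card => -[al xx]; rewrite unfold_in /= inE.
apply/andP/imsetP => [[hq /eqP exx]|[al' hal [-> ->]]].
  by subst xx; exists al; rewrite ?inE.
by rewrite inE in hal; split.
Qed.

Lemma cW s : cnt W p s.+1 = (cnt A p s.+1 ^ p + p.-1 * (#|A| ^ p.-1 * cnt A p s))%N.
Proof.
rewrite /cnt card_split (bigD1 1) //=; congr (_ + _)%N.
  have e := @card_ffun_on Z A [set a : A | a ^+ (p ^ s.+1) == 1].
  rewrite cardZ in e; rewrite -e; apply: eq_card => al.
  rewrite !inE wexp1 Pn1 expg1n andbT exp1_ffun.
  by apply/forallP/ffun_onP => h b; have := h b; rewrite inE.
rewrite (eq_bigr (fun _ => (#|A| ^ p.-1 * cnt A p s)%N)); last first.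
  move=> x hx; rewrite /cnt.
  rewrite (eq_card (B := [set al : K | Phi al x \in [set a : A | a ^+ (p ^ s) == 1]])); last first.
    by move=> al; rewrite !inE Qx.
  by rewrite card_pre // fib1 // mulnC.
rewrite sum_nat_const cardC1 cardZ //.
Qed.
End Wr.

From mathcomp Require Import zify ring.

Lemma key_nat (p n a0 a1 : nat) : (1 < p)%N -> (0 < n)%N -> (a0 <= n)%N -> (a1 <= n)%N -> (a0 = n -> a1 = n) ->
  ((a1^p + p.-1 * (n^p.-1 * a0)) == n^p * p)%N = (a0 == n).
Proof.
case: p => // q hq hn ha0 ha1 himp /=.
have hX : (0 < n ^ q)%N by rewrite expn_gt0 hn.
have e : (n ^ q.+1 = n ^ q * n)%N by rewrite expnSr.
rewrite e.
apply/eqP/eqP => [h|h]; last first.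
  have h1 := himp h; subst; rewrite -e; nia.
have ha : (a1 ^ q.+1 <= n ^ q * n)%N by rewrite -e leq_exp2r.
move: ha h; set X := (n ^ q)%N; nia.
Qed.

Local Open Scope ring_scope.

Lemma arith (p n C0 C1 : nat) : (0 < p)%N -> (0 < n)%N ->
 ((C1^p + p.-1 * (n^p.-1 * C0))%N%:R / (n^p * p)%N%:R : rat) = (1 - p%:R^-1) * (C0%:R / n%:R) + (C1%:R / n%:R)^+p / p%:R.
Proof.
case: p => // q _ hn. rewrite /= natrD !natrM !natrX exprMn exprVn !exprS.
have h1 : (n%:R : rat) != 0 by rewrite pnatr_eq0 -lt0n.
have h2 : (n%:R : rat) ^+ q != 0 by rewrite expf_neq0.
rewrite -[(q.+1)%:R]natr1.
field. by rewrite h1 h2 natr1 pnatr_eq0.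
Qed.

Lemma arith' (p n C0 C1 L : nat) : (0 < p)%N -> (0 < n)%N ->
 L = (C1^p + p.-1 * (n^p.-1 * C0))%N ->
 (L%:R / (n^p * p)%N%:R : rat) = (1 - p%:R^-1) * (C0%:R / n%:R) + (C1%:R / n%:R)^+p / p%:R.
Proof. by move=> ? ? ->; apply: arith. Qed.

Theorem corollary5p1 (p : nat) (A : finGroupType) (k : int) :
  prime p -> (p.-group [set: A])%g -> (1 < #|A|)%N ->
  r_ratio p (wreath A 'Z_p) k =
    (1 - (p%:R : rat)^-1) * r_ratio p A k + (r_ratio p A (k - 1)) ^+ p / p%:R.
Proof.
move=> pr pA _.
have p1 := prime_gt1 pr.
have p0 := prime_gt0 pr.
set W := wreath A 'Z_p.
have hn : (0 < #|A|)%N by apply/card_gt0P; exists 1%g.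
have cW_card : #|W| = (#|A| ^ p * p)%N.
  by rewrite /W card_prod card_ffun cardZ.
have pW : (p.-group [set: W])%g.
  rewrite /pgroup cardsT cW_card pnatM pnatX pnat_id // andbT.
  have := pA; rewrite /pgroup cardsT => ->; by [].
have hAc : (p ^ logn p #|A| = #|A|)%N by have := card_pgroup pA; rewrite cardsT => <-.
have hWc : (p ^ logn p #|W| = #|W|)%N by have := card_pgroup pW; rewrite cardsT => <-.
set f := logn p (max_elt_order A).
have hf : logn p (max_elt_order W) = f.+1.
  have key : forall t, (logn p (max_elt_order W) <= t.+1)%N = (f <= t)%N.
    move=> t; rewrite -maxord // -maxord // cW // cW_card key_nat //.
    - by rewrite /cnt max_card.
    - by rewrite /cnt max_card.
    - by move/eqP; rewrite maxord // => h; apply/eqP; rewrite maxord //; exact: leqW.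
  case e: (logn p (max_elt_order W)) => [|t].
    have := @maxord W p pr pW 0; rewrite e cnt0 // cW_card => /eqP h.
    have : (p <= #|A| ^ p * p)%N by rewrite leq_pmull // expn_gt0 hn.
    by rewrite -h leqNgt p1.
  rewrite e in key.
  have h1 : (f <= t)%N by rewrite -key ltnS.
  have h2 : (t <= f)%N by have := key f; rewrite leqnn ltnS.
  by apply/eqP; rewrite eqSS eqn_leq h1 h2.
rewrite /r_ratio /= hf hWc hAc cW_card !Ncount //.
have e1 : (f.+1%:Z - k = (f%:Z - k) + 1)%R by lia.
have e2 : (f%:Z - (k - 1) = (f%:Z - k) + 1)%R by lia.
rewrite e1 e2.
case: (f%:Z - k)%R => [t|[|m]].
- have -> : (Posz t + 1 = Posz t.+1)%R by rewrite -addn1.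
  by rewrite cW // arith.
- rewrite /= subnn !cnt0 //.
  by apply: arith' => //; rewrite !muln0 addn0 exp1n.
- rewrite /=.
  by apply: arith' => //; rewrite !muln0 addn0 exp0n.
Qed.
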